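(* Let $\mathbb F$ be a field of characteristic $2$, let $S=\{R_0,\dots,R_d\}$ be a quasi-thin scheme on $X$, $x\in X$, $\mathcal T=\mathcal T(x)$, and $E_a^*=E_a^*(x)$. Then the Jacobson radical of $\mathcal T$ equals $$\mathcal J_1=\bigl\langle \{E_a^*JE_b^*: R_a,R_b\in S,\ \max\{k_a,k_b\}=2\}\bigr\rangle_{\mathbb F},$$ where $J$ is the all-ones matrix.
   Context: Let $X$ be a nonempty finite set. A scheme of class $d$ on $X$ is a partition $S=\{R_0,\dots,R_d\}$ of $X\times X$ into nonempty sets such that $R_0=\{(b,b):b\in X\}$; for each $c$ there is $c'$ with $R_{c'}=\{(f,e):(e,f)\in R_c\}$; and for all $i,j,k$ the intersection number $p_{ij}^k=|\{\ell\in X:(m,\ell)\in R_i,(\ell,n)\in R_j\}|$ does not depend on $(m,n)\in R_k$. The valency of $R_a$ is $k_a=p_{aa'}^0$; $S$ is quasi-thin if all $k_a\le 2$. For $y\in X$, $yR_a=\{z:(y,z)\in R_a\}$. $A_a\in M_X(\mathbb F)$ is the $(0,1)$ adjacency matrix of $R_a$ and $E_a^*(y)$ is the diagonal $(0,1)$-matrix with ones exactly at positions indexed by $yR_a$. The Terwilliger $\mathbb F$-algebra $\mathcal T(y)$ is the $\mathbb F$-subalgebra of $M_X(\mathbb F)$ generated by $A_0,\dots,A_d,E_0^*(y),\dots,E_d^*(y)$. $\langle Y\rangle_{\mathbb F}$ denotes $\mathbb F$-linear span (the zero space if $Y$ is empty). *)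

(* Defs.v *)
From HB Require Import structures.
From mathcomp Require Import all_boot all_order all_algebra.
Set Implicit Arguments. Unset Strict Implicit. Unset Printing Implicit Defensive.
Import GRing.Theory.
Local Open Scope ring_scope.

(* The finite set X is modelled as 'I_n; a partition of X x X into
   R_0,...,R_d is given by the map r : X -> X -> 'I_d.+1 with
   R_a = [set (y,z) | r y z == a]. *)

Definition rel_class n d (r : 'I_n -> 'I_n -> 'I_d.+1) (a : 'I_d.+1) (y : 'I_n) :
  {set 'I_n} := [set z | r y z == a].

Definition inter_count n d (r : 'I_n -> 'I_n -> 'I_d.+1) (i j : 'I_d.+1)
  (m m' : 'I_n) : nat := #|[set l | (r m l == i) && (r l m' == j)]|.

Definition is_scheme n d (r : 'I_n -> 'I_n -> 'I_d.+1) : Prop :=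
  [/\ (0 < n)%N,
      forall a : 'I_d.+1, exists y z, r y z = a,
      forall y z, (r y z == ord0) = (y == z),
      forall c : 'I_d.+1, exists c' : 'I_d.+1, forall y z, r y z = c <-> r z y = c' &
      forall i j k : 'I_d.+1, exists p : nat,
        forall m m', r m m' = k -> inter_count r i j m m' = p].

(* valency k_a = p_{aa'}^0 = |y R_a| for any y (for a scheme independent of y) *)
Definition valency n d (r : 'I_n -> 'I_n -> 'I_d.+1) (y : 'I_n) (a : 'I_d.+1) : nat :=
  #|rel_class r a y|.

Definition quasi_thin n d (r : 'I_n -> 'I_n -> 'I_d.+1) : Prop :=
  forall (y : 'I_n) (a : 'I_d.+1), (valency r y a <= 2)%N.

Definition adjmx (F : fieldType) n d (r : 'I_n -> 'I_n -> 'I_d.+1) (a : 'I_d.+1)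
  : 'M[F]_n := \matrix_(i, j) (r i j == a)%:R.

Definition dualidem (F : fieldType) n d (r : 'I_n -> 'I_n -> 'I_d.+1) (x : 'I_n)
  (a : 'I_d.+1) : 'M[F]_n := \matrix_(i, j) ((i == j) && (r x i == a))%:R.

Definition onesmx (F : fieldType) n : 'M[F]_n := const_mx 1.

Inductive terwilliger (F : fieldType) n d (r : 'I_n -> 'I_n -> 'I_d.+1) (x : 'I_n)
  : 'M[F]_n -> Prop :=
| T_one : terwilliger r x 1%:M
| T_adj a : terwilliger r x (adjmx F r a)
| T_dual a : terwilliger r x (dualidem F r x a)
| T_add M N : terwilliger r x M -> terwilliger r x N -> terwilliger r x (M + N)
| T_scale (c : F) M : terwilliger r x M -> terwilliger r x (c *: M)
| T_mul M N : terwilliger r x M -> terwilliger r x N -> terwilliger r x (M *m N).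

Definition left_ideal (F : fieldType) n (A L : 'M[F]_n -> Prop) : Prop :=
  [/\ forall M, L M -> A M,
      L 0,
      forall M N, L M -> L N -> L (M + N) &
      forall M N, A M -> L N -> L (M *m N)].

Definition maximal_left_ideal (F : fieldType) n (A L : 'M[F]_n -> Prop) : Prop :=
  [/\ left_ideal A L,
      exists M, A M /\ ~ L M &
      forall L', left_ideal A L' -> (forall M, L M -> L' M) ->
        (forall M, L' M <-> L M) \/ (forall M, L' M <-> A M)].

Definition jacobson_radical (F : fieldType) n (A : 'M[F]_n -> Prop) : 'M[F]_n -> Prop :=
  fun M => A M /\ forall L, maximal_left_ideal A L -> L M.

Definition J1 (F : fieldType) n d (r : 'I_n -> 'I_n -> 'I_d.+1) (x : 'I_n)
  : 'M[F]_n -> Prop :=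
  fun M => exists c : 'I_d.+1 -> 'I_d.+1 -> F,
    M = \sum_(a : 'I_d.+1) \sum_(b : 'I_d.+1 | maxn (valency r x a) (valency r x b) == 2%N)
          c a b *: (dualidem F r x a *m onesmx F n *m dualidem F r x b).

(* Main.v *)
Require Import Defs.
From mathcomp Require Import all_boot all_order all_algebra.
From Stdlib Require Import Classical.
Set Implicit Arguments. Unset Strict Implicit. Unset Printing Implicit Defensive.
Import GRing.Theory.
Local Open Scope ring_scope.

Section Main.
Variables (F : fieldType) (n d : nat) (r : 'I_n -> 'I_n -> 'I_d.+1) (x : 'I_n).
Hypothesis ch2 : (2 \in [pchar F])%N.
Hypothesis sch : is_scheme r.
Hypothesis qt : quasi_thin r.

Local Notation cls i := (r x i).
Local Notation T := (terwilliger r x).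
Local Notation kk a := (valency r x a).

Lemma two0 : (2%:R : F) = 0.
Proof. exact: pcharf0. Qed.

Lemma addxx (a : F) : a + a = 0.
Proof. by rewrite -mulr2n -mulr_natr two0 mulr0. Qed.

Lemma oppF (a : F) : - a = a.
Proof. by apply/eqP; rewrite eq_sym -addr_eq0 addxx. Qed.

Lemma kk_le2 a : (kk a <= 2)%N.
Proof. exact: qt. Qed.

Lemma kk_gt0 i : (0 < kk (cls i))%N.
Proof. by rewrite /valency /rel_class card_gt0; apply/set0Pn; exists i; rewrite inE. Qed.

Lemma kk12 i : kk (cls i) = 1%N \/ kk (cls i) = 2%N.
Proof. have := kk_le2 (cls i); have := kk_gt0 i; case: (kk (cls i)) => [|[|[|]]] //; by [left|right]. Qed.

Lemma cell1 i j : kk (cls i) = 1%N -> cls j = cls i -> j = i.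
Proof.
move=> /eqP/cards1P [z Hz] Hj.
have hi : i \in rel_class r (cls i) x by rewrite inE.
have hj : j \in rel_class r (cls i) x by rewrite inE Hj.
by move: hi hj; rewrite Hz !inE => /eqP -> /eqP ->.
Qed.

Lemma cell2 p q i : cls p = cls q -> p != q -> cls i = cls p -> i = p \/ i = q.
Proof.
move=> Hpq npq Hi.
have sub : [set p; q] \subset rel_class r (cls p) x.
  by apply/subsetP => z /set2P [] ->; rewrite inE ?Hpq.
have : [set p; q] == rel_class r (cls p) x.
  by rewrite eqEcard sub cards2 npq; exact: kk_le2.
move/eqP=> E.
have : i \in rel_class r (cls p) x by rewrite inE Hi.
by rewrite -E => /set2P.
Qed.

Lemma card_sum (P : pred 'I_n) : #|[set l | P l]| = (\sum_l (P l : nat))%N.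
Proof.
rewrite -sum1_card big_mkcond /=; apply: eq_bigr => l _; rewrite inE; by case: (P l).
Qed.

Lemma sum_delta (I : finType) (P : pred I) (i : I) (f : I -> F) :
  \sum_(l | P l) (i == l)%:R * f l = if P i then f i else 0.
Proof.
rewrite big_mkcond (bigD1 i) //= eqxx mul1r big1 ?addr0 //.
by move=> j nji; rewrite eq_sym (negbTE nji) mul0r; case: (P j).
Qed.


Lemma sum_cell_const (h : 'I_n -> F) a i0 : cls i0 = a ->
  (forall l, cls l = a -> h l = h i0) ->
  \sum_(l | cls l == a) h l = (kk a)%:R * h i0.
Proof.
move=> Hi0 H.
transitivity (\sum_l ((cls l == a : nat)%:R * h i0)).
  rewrite big_mkcond; apply: eq_bigr => l _.
  by case: eqP => [/H ->|_]; rewrite ?mul1r ?mul0r.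
by rewrite -mulr_suml -natr_sum -card_sum.
Qed.

Lemma sum_cellconst (g w1 w2 : 'I_n -> F) :
  (forall m m', cls m = cls m' -> g m = g m') ->
  (forall a, \sum_(l | cls l == a) w1 l = \sum_(l | cls l == a) w2 l) ->
  \sum_m w1 m * g m = \sum_m w2 m * g m.
Proof.
move=> Hg Hw.
rewrite (partition_big (fun m => cls m) xpredT) //=.
rewrite [RHS](partition_big (fun m => cls m) xpredT) //=.
apply: eq_bigr => a _.
case: (pickP (fun m => cls m == a)) => [m0 /eqP Hm0|none].
  rewrite (eq_bigr (fun m => w1 m * g m0)); last by move=> m /eqP Hm; rewrite (Hg m m0) // Hm.
  rewrite [RHS](eq_bigr (fun m => w2 m * g m0)); last by move=> m /eqP Hm; rewrite (Hg m m0) // Hm.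
  by rewrite -!mulr_suml Hw.
by rewrite !big_pred0 // => m /=; rewrite none.
Qed.


Lemma sum_delta1 (I : finType) (P : pred I) (i : I) :
  \sum_(l | P l) ((i == l)%:R : F) = (P i)%:R.
Proof.
rewrite (eq_bigr (fun l => (i == l)%:R * 1)); last by move=> l _; rewrite mulr1.
by rewrite sum_delta; case: (P i).
Qed.

Definition GoodR (M : 'M[F]_n) := forall a i i', cls i = cls i' ->
  \sum_(l | cls l == a) M i l = \sum_(l | cls l == a) M i' l.
Definition GoodC (M : 'M[F]_n) := forall a j j', cls j = cls j' ->
  \sum_(l | cls l == a) M l j = \sum_(l | cls l == a) M l j'.

Lemma cntR a c i i' : cls i = cls i' ->
  #|[set l | (cls l == a) && (r i l == c)]| = #|[set l | (cls l == a) && (r i' l == c)]|.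
Proof.
case: sch => _ _ _ Htr Hint Hii.
have [c' Hc] := Htr c. have [p Hp] := Hint a c' (cls i).
have E j : #|[set l | (cls l == a) && (r j l == c)]| = inter_count r a c' x j.
  rewrite /inter_count; apply: eq_card => l; rewrite !inE; congr (_ && _).
  by apply/eqP/eqP => [/(Hc j l).1|/(Hc j l).2].
by rewrite !E (Hp x i) // (Hp x i').
Qed.

Lemma cntC a c j j' : cls j = cls j' ->
  #|[set l | (cls l == a) && (r l j == c)]| = #|[set l | (cls l == a) && (r l j' == c)]|.
Proof.
case: sch => _ _ _ Htr Hint Hjj.
have [p Hp] := Hint a c (cls j).
have E m : #|[set l | (cls l == a) && (r l m == c)]| = inter_count r a c x m by [].
by rewrite !E (Hp x j) // (Hp x j').
Qed.

Lemma adj_rowsum c a i : \sum_(l | cls l == a) adjmx F r c i l =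
  (#|[set l | (cls l == a) && (r i l == c)]|)%:R.
Proof.
rewrite card_sum natr_sum big_mkcond; apply: eq_bigr => l _; rewrite mxE.
by case: (cls l == a); case: (r i l == c).
Qed.

Lemma adj_colsum c a j : \sum_(l | cls l == a) adjmx F r c l j =
  (#|[set l | (cls l == a) && (r l j == c)]|)%:R.
Proof.
rewrite card_sum natr_sum big_mkcond; apply: eq_bigr => l _; rewrite mxE.
by case: (cls l == a); case: (r l j == c).
Qed.

Lemma dual_entry c i l : dualidem F r x c i l = (i == l)%:R * (cls i == c)%:R.
Proof. by rewrite mxE; case: (i == l); case: (cls i == c); rewrite /= ?mulr1n ?mulr0n ?mulr1 ?mulr0. Qed.

Lemma dual_entry' c l j : dualidem F r x c l j = (j == l)%:R * (cls l == c)%:R.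
Proof. rewrite mxE eq_sym; case: (j == l); case: (cls l == c); by rewrite /= ?mulr1n ?mulr0n ?mulr1 ?mulr0. Qed.

Lemma T_good M : T M -> GoodR M /\ GoodC M.
Proof.
elim=> {M} [| c | c | M N _ [HM1 HM2] _ [HN1 HN2] | k M _ [H1 H2] | M N _ [HM1 HM2] _ [HN1 HN2]].
- split=> a i i' E.
    rewrite (eq_bigr (fun l => (i == l)%:R)); last by move=> l _; rewrite mxE.
    rewrite [RHS](eq_bigr (fun l => (i' == l)%:R)); last by move=> l _; rewrite mxE.
    by rewrite !sum_delta1 E.
  rewrite (eq_bigr (fun l => (i == l)%:R)); last by move=> l _; rewrite mxE eq_sym.
  rewrite [RHS](eq_bigr (fun l => (i' == l)%:R)); last by move=> l _; rewrite mxE eq_sym.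
  by rewrite !sum_delta1 E.
- by split=> a i i' E; rewrite ?adj_rowsum ?adj_colsum ?(cntR a c E) ?(cntC a c E).
- split=> a i i' E.
    rewrite (eq_bigr _ (fun l _ => dual_entry c i l)) [RHS](eq_bigr _ (fun l _ => dual_entry c i' l)).
    by rewrite !sum_delta E.
  rewrite (eq_bigr _ (fun l _ => dual_entry' c l i)) [RHS](eq_bigr _ (fun l _ => dual_entry' c l i')).
  by rewrite !sum_delta E.
- split=> a i i' E.
    rewrite (eq_bigr (fun l => M i l + N i l)); last by move=> l _; rewrite mxE.
    rewrite [RHS](eq_bigr (fun l => M i' l + N i' l)); last by move=> l _; rewrite mxE.
    by rewrite !big_split /= (HM1 a i i') // (HN1 a i i').
  rewrite (eq_bigr (fun l => M l i + N l i)); last by move=> l _; rewrite mxE.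
  rewrite [RHS](eq_bigr (fun l => M l i' + N l i')); last by move=> l _; rewrite mxE.
  by rewrite !big_split /= (HM2 a i i') // (HN2 a i i').
- split=> a i i' E.
    rewrite (eq_bigr (fun l => k * M i l)); last by move=> l _; rewrite mxE.
    rewrite [RHS](eq_bigr (fun l => k * M i' l)); last by move=> l _; rewrite mxE.
    by rewrite -!mulr_sumr (H1 a i i').
  rewrite (eq_bigr (fun l => k * M l i)); last by move=> l _; rewrite mxE.
  rewrite [RHS](eq_bigr (fun l => k * M l i')); last by move=> l _; rewrite mxE.
  by rewrite -!mulr_sumr (H2 a i i').
- split=> a i i' E.
    have ex j : \sum_(l | cls l == a) (M *m N) j l = \sum_m M j m * (\sum_(l | cls l == a) N m l).
      rewrite (eq_bigr (fun l => \sum_m M j m * N m l)); last by move=> l _; rewrite mxE.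
      rewrite exchange_big /=; apply: eq_bigr => m _; by rewrite mulr_sumr.
    rewrite !ex; apply: sum_cellconst; first by move=> m m' Em; apply: HN1.
    by move=> b; apply: HM1.
  have ex j : \sum_(l | cls l == a) (M *m N) l j = \sum_m N m j * (\sum_(l | cls l == a) M l m).
    rewrite (eq_bigr (fun l => \sum_m M l m * N m j)); last by move=> l _; rewrite mxE.
    rewrite exchange_big /=; apply: eq_bigr => m _; by rewrite mulrC mulr_suml.
  rewrite !ex; apply: sum_cellconst; first by move=> m m' Em; apply: HM2.
  by move=> b; apply: HN2.
Qed.


Definition cc (w : 'cV[F]_n) := forall i i', cls i = cls i' -> w i 0 = w i' 0.
Definition W1 (w : 'cV[F]_n) := cc w /\ forall i, kk (cls i) = 1%N -> w i 0 = 0.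
Definition ev (j : 'I_n) : 'cV[F]_n := delta_mx j 0.
Definition ind (a : 'I_d.+1) : 'cV[F]_n := \col_i ((cls i == a)%:R).

Lemma mulv_entry (M : 'M[F]_n) (w : 'cV[F]_n) i : (M *m w) i 0 = \sum_l M i l * w l 0.
Proof. by rewrite mxE. Qed.

Lemma ev_entry j i : ev j i 0 = (i == j)%:R.
Proof. by rewrite mxE andbT. Qed.

Lemma mul_ev (M : 'M[F]_n) j i : (M *m ev j) i 0 = M i j.
Proof.
rewrite mulv_entry (eq_bigr (fun l => (j == l)%:R * M i l)).
  by rewrite sum_delta.
by move=> l _; rewrite ev_entry eq_sym mulrC.
Qed.

Lemma ind_entry a i : ind a i 0 = (cls i == a)%:R.
Proof. by rewrite mxE. Qed.

Lemma mul_ind (M : 'M[F]_n) a i : (M *m ind a) i 0 = \sum_(l | cls l == a) M i l.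
Proof.
rewrite mulv_entry [RHS]big_mkcond; apply: eq_bigr => l _; rewrite ind_entry.
by case: (cls l == a); rewrite ?mulr1 ?mulr0.
Qed.

Lemma sum_single (h : 'I_n -> F) i : kk (cls i) = 1%N ->
  \sum_(m | cls m == cls i) h m = h i.
Proof.
move=> k1; rewrite (sum_cell_const (i0 := i)) // ?k1 ?mul1r //.
by move=> l El; rewrite (cell1 k1 El).
Qed.

Lemma colconst_single M l l' j : GoodR M -> kk (cls j) = 1%N -> cls l = cls l' ->
  M l j = M l' j.
Proof. by move=> HR k1 E; have := HR (cls j) l l' E; rewrite !sum_single. Qed.

Lemma rowconst_single M i l l' : GoodC M -> kk (cls i) = 1%N -> cls l = cls l' ->
  M i l = M i l'.
Proof. by move=> HC k1 E; have := HC (cls i) l l' E; rewrite !sum_single. Qed.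

Lemma sum_cell_even (h : 'I_n -> F) a :
  (forall l l', cls l = a -> cls l' = a -> h l = h l') -> kk a = 2%N ->
  \sum_(l | cls l == a) h l = 0.
Proof.
move=> Hh k2.
case: (pickP (fun m => cls m == a)) => [m0 /eqP Hm0|none].
  rewrite (sum_cell_const (i0 := m0)) // ?k2 ?two0 ?mul0r //.
  by move=> l El; apply: Hh.
by rewrite big_pred0.
Qed.

Lemma good_cc M w : GoodR M -> cc w -> cc (M *m w).
Proof.
move=> HR Hw i i' E; rewrite !mulv_entry; apply: sum_cellconst.
  by move=> m m' Em; apply: Hw.
by move=> a; apply: HR.
Qed.

Lemma good_W1 M w : GoodR M -> GoodC M -> W1 w -> W1 (M *m w).
Proof.
move=> HR HC [Hcc H1]; split; first exact: good_cc.
move=> i k1; rewrite mulv_entry (partition_big (fun m => cls m) xpredT) //=.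
apply: big1 => a _.
case: (pickP (fun m => cls m == a)) => [m0 /eqP Hm0|none]; last by rewrite big_pred0.
case: (kk12 m0) => km0.
  apply: big1 => l /eqP El; rewrite H1 ?mulr0 // El -Hm0 //.
rewrite sum_cell_even // -?Hm0 //.
move=> l l' El El'; rewrite (rowconst_single HC k1 (l' := l')) ?El ?El' //.
by rewrite (Hcc l l') ?El ?El'.
Qed.

Lemma T0 : T (0 : 'M[F]_n).
Proof. by have := T_scale 0 (T_one F r x); rewrite scale0r. Qed.

Lemma Tneg (M : 'M[F]_n) : T M -> T (- M).
Proof. by move=> TM; have := T_scale (-1) TM; rewrite scaleN1r. Qed.

Lemma genmax (v : 'cV[F]_n) (W : 'cV[F]_n -> Prop) :
  W 0 -> (forall u w, W u -> W w -> W (u + w)) ->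
  (forall N w, T N -> W w -> W (N *m w)) -> ~ W v ->
  (forall N, T N -> ~ W (N *m v) -> exists P, T P /\ W (P *m (N *m v) - v)) ->
  maximal_left_ideal T (fun P => T P /\ W (P *m v)).
Proof.
move=> W0 WD WT Wv Wmax.
have LI : left_ideal T (fun P => T P /\ W (P *m v)).
  split.
  - by move=> M [].
  - by split; [exact: T0 | rewrite mul0mx].
  - by move=> M N [TM WM] [TN WN]; split; [exact: T_add | rewrite mulmxDl; apply: WD].
  - by move=> M N TM [TN WN]; split; [exact: T_mul | rewrite -mulmxA; apply: WT].
split => //.
- exists 1%:M; split; [exact: T_one | by rewrite mul1mx; case].
- move=> L' [L'T L'0 L'D L'M] Hsub.
  case: (classic (exists N, L' N /\ ~ (T N /\ W (N *m v)))) => [[N [L'N nLN]]|H].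
  + right => M; split; [exact: L'T|] => TM.
    have TN := L'T N L'N.
    have nW : ~ W (N *m v) by move=> h; apply: nLN.
    have [P [TP WP]] := Wmax N TN nW.
    have TPN1 : T (P *m N - 1%:M) by apply: T_add; [exact: T_mul | apply: Tneg; exact: T_one].
    have L1 : L' (P *m N - 1%:M).
      by apply: Hsub; split => //; rewrite mulmxBl mul1mx -mulmxA.
    have L2 : L' (P *m N) by apply: L'M.
    have L3 : L' 1%:M.
      have Tm1 : T (- (1%:M : 'M[F]_n)) by apply: Tneg; exact: T_one.
      have := L'D _ _ L2 (L'M _ _ Tm1 L1).
      by rewrite mulNmx mul1mx opprB addrC subrK.
    by have := L'M M _ TM L3; rewrite mulmx1.
  + left => M; split; last by apply: Hsub.
    move=> L'M0; apply: NNPP => nL; apply: H; exists M; split => //.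
Qed.

Lemma rad_W M (v : 'cV[F]_n) (W : 'cV[F]_n -> Prop) :
  jacobson_radical T M ->
  W 0 -> (forall u w, W u -> W w -> W (u + w)) ->
  (forall N w, T N -> W w -> W (N *m w)) -> ~ W v ->
  (forall N, T N -> ~ W (N *m v) -> exists P, T P /\ W (P *m (N *m v) - v)) ->
  W (M *m v).
Proof.
move=> [TM H] W0 WD WT Wv Wmax.
by have [] := H _ (genmax W0 WD WT Wv Wmax).
Qed.


Lemma dual_mul c m p (B : 'M[F]_(n, p)) l :
  (dualidem F r x c *m B) m l = (cls m == c)%:R * B m l.
Proof.
rewrite mxE (eq_bigr (fun k => (m == k)%:R * ((cls m == c)%:R * B k l))).
  by rewrite sum_delta.
by move=> k _; rewrite dual_entry mulrA.
Qed.

Lemma adj_mul c m p (B : 'M[F]_(n, p)) l :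
  (adjmx F r c *m B) m l = \sum_k (r m k == c)%:R * B k l.
Proof. by rewrite mxE; apply: eq_bigr => k _; rewrite mxE. Qed.

Lemma W1_0 : W1 0.
Proof. by split; move=> *; rewrite !mxE. Qed.

Lemma W1_add u w : W1 u -> W1 w -> W1 (u + w).
Proof.
move=> [cu su] [cw sw]; split.
  by move=> i i' E; rewrite !mxE (cu i i') ?(cw i i').
by move=> i k; rewrite mxE su ?sw ?addr0.
Qed.

Lemma W1_T N w : T N -> W1 w -> W1 (N *m w).
Proof. by move=> TN Hw; have [HR HC] := T_good TN; exact: good_W1. Qed.

Lemma layer1 (M : 'M[F]_n) i j : jacobson_radical T M -> kk (cls i) = 1%N -> kk (cls j) = 1%N ->
  M i j = 0.
Proof.
move=> HM ki kj.
suff [_ H] : W1 (M *m ev j) by have := H i ki; rewrite mul_ev.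
apply: (rad_W HM W1_0 W1_add W1_T).
  by case=> _ H; have := H j kj; rewrite ev_entry eqxx; apply/eqP; exact: oner_neq0.
move=> N TN nW; have [HR HC] := T_good TN.
have ccN : cc (N *m ev j).
  by move=> i1 i1' E; rewrite !mul_ev; exact: colconst_single.
have [i0 [ki0 Ni0]] : exists i0, kk (cls i0) = 1%N /\ N i0 j != 0.
  apply: NNPP => H; apply: nW; split => // i1 k1; rewrite mul_ev.
  by case: (eqVneq (N i1 j) 0) => // nz; exfalso; apply: H; exists i1.
exists ((N i0 j)^-1 *: (dualidem F r x (cls j) *m adjmx F r (r j i0) *m dualidem F r x (cls i0))).
split.
  by apply: T_scale; apply: T_mul; [apply: T_mul; [exact: T_dual | exact: T_adj] | exact: T_dual].
suff -> : (N i0 j)^-1 *: (dualidem F r x (cls j) *m adjmx F r (r j i0) *m dualidem F r x (cls i0))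
   *m (N *m ev j) = ev j by rewrite subrr; exact: W1_0.
apply/matrixP => m k; rewrite (ord1 k) -scalemxAl -!mulmxA [in LHS]mxE dual_mul adj_mul ev_entry.
case: (eqVneq (cls m) (cls j)) => [Em|nEm]; last first.
  rewrite mul0r mulr0; case: (eqVneq m j) => [Emj|//]; by rewrite Emj eqxx in nEm.
rewrite (cell1 kj Em) !eqxx mul1r (bigD1 i0) //= big1 ?addr0.
  by rewrite eqxx mul1r dual_mul eqxx mul1r mul_ev mulVf.
move=> k' nk'; rewrite dual_mul; case: (eqVneq (cls k') (cls i0)) => [E'|]; last by rewrite !mul0r mulr0.
by rewrite (cell1 ki0 E') eqxx in nk'.
Qed.


Lemma card_sub_kk (P : pred 'I_n) b : (#|[set l | (cls l == b) && P l]| <= kk b)%N.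
Proof. by apply: subset_leq_card; apply/subsetP => l; rewrite !inE => /andP []. Qed.

Lemma sum_nat_cell (h : 'I_n -> nat) a i0 : cls i0 = a ->
  (forall l, cls l = a -> h l = h i0) -> (\sum_(l | cls l == a) h l = kk a * h i0)%N.
Proof.
move=> Hi0 H; rewrite (eq_bigr (fun=> h i0)); last by move=> l /eqP; apply: H.
rewrite (eq_bigl (fun l => l \in rel_class r a x)); last by move=> l; rewrite inE.
by rewrite sum_nat_const.
Qed.

Lemma dcount a b c :
  (\sum_(l | cls l == a) #|[set m | (cls m == b) && (r l m == c)]| =
   \sum_(m | cls m == b) #|[set l | (cls l == a) && (r l m == c)]|)%N.
Proof.
have E1 : (\sum_(l | cls l == a) #|[set m | (cls m == b) && (r l m == c)]| =
   \sum_l \sum_m ((cls l == a) && ((cls m == b) && (r l m == c)) : nat))%N.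
  rewrite big_mkcond; apply: eq_bigr => l _; rewrite card_sum.
  by case: (cls l == a) => //=; rewrite big1.
have E2 : (\sum_(m | cls m == b) #|[set l | (cls l == a) && (r l m == c)]| =
   \sum_m \sum_l ((cls l == a) && ((cls m == b) && (r l m == c)) : nat))%N.
  rewrite big_mkcond; apply: eq_bigr => m _; rewrite card_sum.
  case: (cls m == b) => /=; last by rewrite big1 // => l _; rewrite andbF.
  by apply: eq_bigr => l _.
by rewrite E1 E2 exchange_big.
Qed.

Lemma cell_ex a : (0 < kk a)%N -> exists i, cls i = a.
Proof. by rewrite card_gt0 => /set0Pn [i]; rewrite inE => /eqP; exists i. Qed.

Lemma W1_ind b : kk b = 2%N -> W1 (ind b).
Proof.
move=> kb; split; first by move=> i i' E; rewrite !ind_entry E.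
move=> i ki; rewrite ind_entry; case: eqP => // E.
by rewrite E kb in ki.
Qed.

Lemma boolR_neq0 (b : bool) : (b%:R : F) != 0 -> b.
Proof. by case: b => //; rewrite eqxx. Qed.

Definition Rel2 a b := exists P, T P /\ P *m ind a = ind b.

Lemma Rel2_refl a : Rel2 a a.
Proof. by exists 1%:M; split; [exact: T_one | rewrite mul1mx]. Qed.

Lemma Rel2_trans a b c : Rel2 a b -> Rel2 b c -> Rel2 a c.
Proof.
move=> [P [TP HP]] [Q [TQ HQ]]; exists (Q *m P); split; first exact: T_mul.
by rewrite -mulmxA HP.
Qed.

Lemma count_one (s : nat) : (s <= 2)%N -> (s%:R : F) != 0 -> s = 1%N.
Proof. by case: s => [|[|[|]]] //; rewrite ?eqxx // two0 eqxx. Qed.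

Lemma inv2 N : T N -> forall i b, kk (cls i) = 2%N -> kk b = 2%N ->
  (N *m ind b) i 0 != 0 -> Rel2 (cls i) b.
Proof.
elim=> {N} [| c | c | M N _ IHM _ IHN | k M _ IH | M N TM IHM TN IHN] i b ki kb.
- rewrite mul1mx ind_entry => /boolR_neq0/eqP ->; exact: Rel2_refl.
- rewrite mul_ind adj_rowsum => Hs.
  have s1 := count_one (leq_trans (card_sub_kk (fun l => r i l == c) b) (kk_le2 b)) Hs.
  have [m0 Hm0] := cell_ex (a := b) ltac:(by rewrite kb).
  have := dcount (cls i) b c.
  rewrite (sum_nat_cell (i0 := i)) //; last by move=> l El; apply: cntR.
  rewrite (sum_nat_cell (i0 := m0)) // ?ki ?kb ?s1; last by move=> l El; apply: cntC; rewrite El.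
  move=> /eqP; rewrite eqn_pmul2l // => /eqP t1.
  case: sch => _ _ _ Htr _; have [c' Hc] := Htr c.
  exists (dualidem F r x b *m adjmx F r c'); split; first by apply: T_mul; [exact: T_dual | exact: T_adj].
  apply/matrixP => m k; rewrite (ord1 k) -mulmxA dual_mul mul_ind adj_rowsum ind_entry.
  case: (eqVneq (cls m) b) => [Em|]; last by rewrite mul0r.
  suff -> : #|[set l | (cls l == cls i) && (r m l == c')]| = 1%N by rewrite mul1r.
  rewrite t1 -(@cntC (cls i) c m m0) ?Em ?Hm0 //; apply: eq_card => l; rewrite !inE.
  by congr (_ && _); apply/eqP/eqP => [/(Hc l m).2|/(Hc l m).1].
- rewrite dual_mul ind_entry mulf_eq0 negb_or => /andP [_ /boolR_neq0/eqP ->]; exact: Rel2_refl.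
- rewrite mulmxDl mxE; case: (eqVneq ((M *m ind b) i 0) 0) => [z|nz].
    by rewrite z add0r; apply: IHN.
  by move=> _; apply: IHM.
- by rewrite -scalemxAl mxE mulf_eq0 negb_or => /andP [_]; apply: IH.
- have Ww := W1_T TN (W1_ind kb).
  rewrite -mulmxA mulv_entry (partition_big (fun m => cls m) xpredT) //= => Hne.
  have [e He] : exists e, \sum_(l | cls l == e) M i l * (N *m ind b) l 0 != 0.
    apply: NNPP => H; move: Hne; rewrite big1 ?eqxx // => e _.
    by case: (eqVneq (\sum_(l | cls l == e) M i l * (N *m ind b) l 0) 0) => // nz; exfalso; apply: H; exists e.
  case: (pickP (fun m => cls m == e)) => [l0 /eqP Hl0|none]; last by rewrite big_pred0 ?eqxx in He.
  move: He; rewrite (eq_bigr (fun l => M i l * (N *m ind b) l0 0)); last first.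
    by move=> l /eqP El; rewrite (Ww.1 l l0) // El Hl0.
  rewrite -mulr_suml mulf_eq0 negb_or => /andP [h1 h2].
  have kl0 : kk (cls l0) = 2%N.
    by case: (kk12 l0) => // k1; rewrite (Ww.2 l0 k1) eqxx in h2.
  apply: (@Rel2_trans _ e).
    by apply: IHM => //; rewrite ?mul_ind // -Hl0.
  by rewrite -Hl0; apply: IHN.
Qed.


Lemma layer2 (M : 'M[F]_n) b : jacobson_radical T M -> kk b = 2%N -> M *m ind b = 0.
Proof.
move=> HM kb.
apply: (rad_W (W := fun w => w = 0) HM).
- by [].
- by move=> u w -> ->; rewrite addr0.
- by move=> N w _ ->; rewrite mulmx0.
- have [m0 Hm0] := cell_ex (a := b) ltac:(by rewrite kb).
  move=> /matrixP /(_ m0 0); rewrite ind_entry Hm0 eqxx mxE; apply/eqP; exact: oner_neq0.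
move=> N TN nz.
have [i Hi] : exists i, (N *m ind b) i 0 != 0.
  apply: NNPP => H; apply: nz; apply/matrixP => i k; rewrite (ord1 k) [RHS]mxE.
  by case: (eqVneq ((N *m ind b) i 0) 0) => // h; exfalso; apply: H; exists i.
have Ww := W1_T TN (W1_ind kb).
have ki : kk (cls i) = 2%N.
  by case: (kk12 i) => // k1; rewrite (Ww.2 i k1) eqxx in Hi.
have [P0 [TP0 HP0]] := inv2 TN ki kb Hi.
set al := (N *m ind b) i 0.
exists (al^-1 *: (P0 *m dualidem F r x (cls i))); split.
  by apply: T_scale; apply: T_mul => //; exact: T_dual.
rewrite /= -scalemxAl -mulmxA.
suff -> : dualidem F r x (cls i) *m (N *m ind b) = al *: ind (cls i).
  by rewrite -scalemxAr scalerA mulVf // scale1r HP0 subrr.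
apply/matrixP => m k; rewrite (ord1 k) dual_mul [RHS]mxE ind_entry mulrC.
case: (eqVneq (cls m) (cls i)) => [E|_] /=; last by rewrite !mulr0n !mulr0.
by rewrite !mulr1n !mulr1 /al (Ww.1 m i).
Qed.


Lemma cc0 : cc 0.
Proof. by move=> i i' _; rewrite !mxE. Qed.

Lemma cc_add u w : cc u -> cc w -> cc (u + w).
Proof. by move=> hu hw i i' E; rewrite !mxE (hu i i') ?(hw i i'). Qed.

Lemma cc_scale (k : F) w : cc w -> cc (k *: w).
Proof. by move=> hw i i' E; rewrite !mxE (hw i i'). Qed.

Lemma cc_ind a : cc (ind a).
Proof. by move=> i i' E; rewrite !ind_entry E. Qed.

Lemma kk2_of p p' : cls p = cls p' -> p != p' -> kk (cls p) = 2%N.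
Proof.
move=> E npp; apply/eqP; rewrite eqn_leq kk_le2 /=.
have <- : #|[set p; p']| = 2%N by rewrite cards2 npp.
by apply: subset_leq_card; apply/subsetP => z /set2P [] ->; rewrite inE ?E.
Qed.

Lemma ev_diff_entry p q i : cls p = cls q -> p != q ->
  (ev p - ev q) i 0 = (cls i == cls p)%:R.
Proof.
move=> E npq.
have -> : (ev p - ev q) i 0 = ev p i 0 - ev q i 0 by rewrite !mxE.
rewrite !ev_entry.
case: (eqVneq (cls i) (cls p)) => [Ei|nEi] /=.
  have [->|->] := cell2 E npq Ei.
    by rewrite eqxx (negbTE npq) /= subr0.
  by rewrite eqxx eq_sym (negbTE npq) /= sub0r oppF.
have /negbTE -> : i != p by apply: contraNneq nEi => ->.
have /negbTE -> : i != q by apply: contraNneq nEi => ->; rewrite E.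
by rewrite subrr.
Qed.

Lemma ccdelta p q : cls p = cls q -> cc (ev p - ev q).
Proof.
move=> E; case: (eqVneq p q) => [->|npq]; first by rewrite subrr; exact: cc0.
by move=> i i' Ei; rewrite !ev_diff_entry // Ei.
Qed.

Definition Rel3 p q := exists P, T P /\ cc (P *m ev p - ev q).

Lemma Rel3_cls p q : cls p = cls q -> Rel3 p q.
Proof. by move=> E; exists 1%:M; split; [exact: T_one | rewrite mul1mx; exact: ccdelta]. Qed.

Lemma Rel3_trans p l l1 q : Rel3 p l -> cls l = cls l1 -> Rel3 l1 q -> Rel3 p q.
Proof.
move=> [P0 [TP0 H0]] E [P1 [TP1 H1]]; exists (P1 *m P0); split; first exact: T_mul.
have [HR _] := T_good TP1.
have -> : P1 *m P0 *m ev p - ev q =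
   P1 *m (P0 *m ev p - ev l) + P1 *m (ev l - ev l1) + (P1 *m ev l1 - ev q).
  by rewrite !mulmxBr -mulmxA !addrA !subrK.
apply: cc_add; last exact: H1.
by apply: cc_add; apply: good_cc => //; exact: ccdelta.
Qed.

Lemma sum_cell_pair (h : 'I_n -> F) p p' : cls p = cls p' -> p != p' ->
  \sum_(l | cls l == cls p) h l = h p + h p'.
Proof.
move=> E npp; rewrite (bigD1 p) //= (bigD1 p') /=; last by rewrite E eqxx eq_sym.
rewrite big1 ?addr0 // => l /andP [/andP [/eqP El nlp] nlp'].
by case: (cell2 E npp El) => El'; [rewrite El' eqxx in nlp | rewrite El' eqxx in nlp'].
Qed.

Lemma sum_cell_pair_nat (h : 'I_n -> nat) p p' : cls p = cls p' -> p != p' ->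
  (\sum_(l | cls l == cls p) h l = h p + h p')%N.
Proof.
move=> E npp; rewrite (bigD1 p) //= (bigD1 p') /=; last by rewrite E eqxx eq_sym.
rewrite big1 ?addn0 // => l /andP [/andP [/eqP El nlp] nlp'].
by case: (cell2 E npp El) => El'; [rewrite El' eqxx in nlp | rewrite El' eqxx in nlp'].
Qed.


Lemma inv3 (N : 'M[F]_n) : T N -> forall p p' q, cls p = cls p' -> N p q != N p' q -> Rel3 p q.
Proof.
elim=> {N} [| c | c | M N _ IHM _ IHN | k M _ IH | M N TM IHM TN IHN] p p' q Epp.
- rewrite !mxE; case: (eqVneq p q) => [<- _|_]; first exact: Rel3_cls.
  case: (eqVneq p' q) => [<- _|_]; first exact: Rel3_cls.
  by rewrite eqxx.
- rewrite !mxE => Hne.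
  have npp : p != p' by apply: contraNneq Hne => ->.
  have kp := kk2_of Epp npp.
  have t1 : #|[set l | (cls l == cls p) && (r l q == c)]| = 1%N.
    rewrite card_sum (bigID (fun l => cls l == cls p)) /= [X in (_ + X)%N]big1 ?addn0; last by move=> l /negbTE ->.
    rewrite (eq_bigr (fun l => (r l q == c : nat))); last by move=> l ->.
    rewrite (sum_cell_pair_nat _ Epp npp).
    by move: Hne; case: (r p q == c); case: (r p' q == c); rewrite ?eqxx.
  have := dcount (cls p) (cls q) c.
  rewrite (sum_nat_cell (i0 := p)) //; last by move=> l El; apply: cntR.
  rewrite (sum_nat_cell (i0 := q)) //; last by move=> l El; apply: cntC.
  rewrite t1 muln1 kp.
  case: (kk12 q) => -> //; last first.
    move=> /eqP; rewrite -{2}[2%N]muln1 eqn_pmul2l // => /eqP s1.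
    move/eqP: s1 => /cards1P [m0 Hm0].
    have Hm0' : m0 \in [set m | (cls m == cls q) && (r p m == c)] by rewrite Hm0 set11.
    move: Hm0'; rewrite inE => /andP [/eqP Em0 _].
    case: sch => _ _ _ Htr _; have [c' Hc] := Htr c.
    exists (dualidem F r x (cls q) *m adjmx F r c'); split.
      by apply: T_mul; [exact: T_dual | exact: T_adj].
    suff -> : dualidem F r x (cls q) *m adjmx F r c' *m ev p = ev m0 by exact: ccdelta.
    apply/matrixP => m k; rewrite (ord1 k) -mulmxA dual_mul mul_ev mxE ev_entry.
    have Hmm := Hm0; move/setP: Hmm => /(_ m); rewrite !inE.
    have -> : (r m p == c') = (r p m == c).
      by apply/eqP/eqP => [/(Hc p m).2|/(Hc p m).1].
    move=> <-; case: (r p m == c); case: (cls m == cls q); by rewrite /= ?mulr1n ?mulr0n ?mulr1 ?mulr0.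
  move=> H; exfalso; move: H; case: (#|_|) => [|[|s]] //.
- rewrite !dual_entry; case: (eqVneq p q) => [<- _|_]; first exact: Rel3_cls.
  case: (eqVneq p' q) => [<- _|_]; first exact: Rel3_cls.
  by rewrite !mul0r eqxx.
- rewrite !mxE => H; case: (eqVneq (M p q) (M p' q)) => [e|ne]; last exact: (IHM p p' q Epp ne).
  by apply: (IHN p p' q Epp); apply: contraNneq H => e2; rewrite e e2.
- by rewrite !mxE => H; apply: (IH p p' q Epp); apply: contraNneq H => ->.
- move=> Hne.
  have [HRM _] := T_good TM.
  have Hs : \sum_l (M p l - M p' l) * N l q != 0.
    move: Hne; apply: contraNneq => H; rewrite -subr_eq0 !mxE -sumrB; apply/eqP; transitivity (\sum_l (M p l - M p' l) * N l q); last exact: H.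
    by apply: eq_bigr => l _; rewrite mulrBl.
  move: Hs; rewrite (partition_big (fun m => cls m) xpredT) //= => Hs.
  have [e He] : exists e, \sum_(l | cls l == e) (M p l - M p' l) * N l q != 0.
    apply: NNPP => H; move: Hs; rewrite big1 ?eqxx // => e _.
    by case: (eqVneq (\sum_(l | cls l == e) (M p l - M p' l) * N l q) 0) => // nz; exfalso; apply: H; exists e.
  have [l1 [l2 [El1 [El2 Hl]]]] : exists l1 l2, cls l1 = e /\ cls l2 = e /\ N l1 q != N l2 q.
    apply: NNPP => H.
    case: (pickP (fun m => cls m == e)) => [l0 /eqP Hl0|none]; last by rewrite big_pred0 ?eqxx in He.
    move: He; rewrite (eq_bigr (fun l => (M p l - M p' l) * N l0 q)); last first.
      move=> l /eqP El; case: (eqVneq (N l q) (N l0 q)) => [-> //|nz].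
      by exfalso; apply: H; exists l, l0.
    by rewrite -mulr_suml sumrB (HRM e p p') // subrr mul0r eqxx.
  have [l [El Hl']] : exists l, cls l = e /\ M p l != M p' l.
    apply: NNPP => H; move: He; rewrite big1 ?eqxx // => l /eqP El.
    case: (eqVneq (M p l) (M p' l)) => [->|nz]; first by rewrite subrr mul0r.
    by exfalso; apply: H; exists l.
  apply: (@Rel3_trans p l l1); first exact: (IHM p p' l Epp Hl').
    by rewrite El El1.
  by apply: (IHN l1 l2 q); rewrite ?El1 ?El2.
Qed.


Lemma cell_other q : kk (cls q) = 2%N -> exists q', cls q' = cls q /\ q' != q.
Proof.
move/eqP/cards2P => [y [z [nyz E]]].
have cy : cls y = cls q.
  have : y \in rel_class r (cls q) x by rewrite E !inE eqxx.
  by rewrite inE => /eqP.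
have cz : cls z = cls q.
  have : z \in rel_class r (cls q) x by rewrite E !inE eqxx orbT.
  by rewrite inE => /eqP.
have : q \in rel_class r (cls q) x by rewrite inE.
rewrite E => /set2P [] ->.
  by exists z; split; [rewrite cz cy | rewrite eq_sym].
by exists y; split; [rewrite cz cy | ].
Qed.


Lemma layer3 (M : 'M[F]_n) q : jacobson_radical T M -> kk (cls q) = 2%N -> cc (M *m ev q).
Proof.
move=> HM kq.
apply: (rad_W HM cc0 cc_add).
- by move=> N w TN; have [HR _] := T_good TN; exact: good_cc.
- have [q' [Eq' nq']] := cell_other kq.
  by move=> /(_ q q' (esym Eq')); rewrite !ev_entry eqxx (negbTE nq') => /eqP; rewrite oner_eq0.
move=> N TN nW.
have [p [p' [Epp Hne]]] : exists p p', cls p = cls p' /\ N p q != N p' q.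
  apply: NNPP => H; apply: nW => i i' E; rewrite !mul_ev.
  by case: (eqVneq (N i q) (N i' q)) => // nz; exfalso; apply: H; exists i, i'.
have npp : p != p' by apply: contraNneq Hne => ->.
have [P0 [TP0 HP0]] := inv3 TN Epp Hne.
have [HR0 _] := T_good TP0.
set sg := N p q - N p' q.
have sg0 : sg != 0 by rewrite subr_eq0.
exists (sg^-1 *: (P0 *m dualidem F r x (cls p))); split.
  by apply: T_scale; apply: T_mul => //; exact: T_dual.
rewrite -scalemxAl -mulmxA.
have -> : dualidem F r x (cls p) *m (N *m ev q) = sg *: ev p + N p' q *: ind (cls p).
  apply/matrixP => m k; rewrite (ord1 k) dual_mul mul_ev.
  have -> : (sg *: ev p + N p' q *: ind (cls p)) m 0 = sg * ev p m 0 + N p' q * ind (cls p) m 0.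
    by rewrite !mxE.
  rewrite ev_entry ind_entry.
  case: (eqVneq (cls m) (cls p)) => [Em|nEm] /=.
    case: (cell2 Epp npp Em) => ->.
      by rewrite eqxx /= !mulr1n !mul1r !mulr1 /sg subrK.
    by rewrite eq_sym (negbTE npp) mulr0n mulr0 mul1r add0r mulr1.
  have /negbTE -> : m != p by apply: contraNneq nEm => ->.
  by rewrite /= !mulr0n !mul0r !mulr0 addr0.
rewrite mulmxDr -!scalemxAr scalerDr scalerA mulVf // scale1r scalerA.
rewrite addrAC; apply: cc_add => //; apply: cc_scale; apply: good_cc => //; exact: cc_ind.
Qed.


Lemma EJE_entry a b i j :
  (dualidem F r x a *m onesmx F n *m dualidem F r x b) i j = (cls i == a)%:R * (cls j == b)%:R.
Proof.
rewrite -mulmxA dual_mul; congr (_ * _); rewrite mxE.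
rewrite (eq_bigr (fun k => (j == k)%:R * (cls k == b)%:R)); first by rewrite sum_delta.
by move=> k _; rewrite mxE mul1r dual_entry'.
Qed.

Lemma J1_entry (c : 'I_d.+1 -> 'I_d.+1 -> F) i j :
  (\sum_(a : 'I_d.+1) \sum_(b : 'I_d.+1 | maxn (kk a) (kk b) == 2%N)
     c a b *: (dualidem F r x a *m onesmx F n *m dualidem F r x b)) i j =
  if maxn (kk (cls i)) (kk (cls j)) == 2%N then c (cls i) (cls j) else 0.
Proof.
rewrite summxE (eq_bigr (fun a => (cls i == a)%:R *
   \sum_(b | maxn (kk a) (kk b) == 2%N) (cls j == b)%:R * c a b)); last first.
  move=> a _; rewrite summxE mulr_sumr; apply: eq_bigr => b _.
  by rewrite mxE EJE_entry mulrCA mulrA [_ * c a b]mulrC -mulrA.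
rewrite (eq_bigr (fun a => (cls i == a)%:R * \sum_(b | maxn (kk a) (kk b) == 2%N) (cls j == b)%:R * c a b)) //.
rewrite sum_delta /= sum_delta.
by case: ifP.
Qed.

Lemma T_sum (I : finType) (P : pred I) (f : I -> 'M[F]_n) :
  (forall i, P i -> T (f i)) -> T (\sum_(i | P i) f i).
Proof.
move=> H; apply: (big_ind T) => //; first exact: T0.
by move=> A B; apply: T_add.
Qed.

Lemma T_ones : T (onesmx F n).
Proof.
have -> : onesmx F n = \sum_c adjmx F r c.
  apply/matrixP => i j; rewrite summxE mxE.
  rewrite (eq_bigr (fun c => (r i j == c)%:R)); last by move=> c _; rewrite mxE.
  by rewrite sum_delta1.
by apply: T_sum => c _; exact: T_adj.
Qed.

Definition Jform (N : 'M[F]_n) :=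
  [/\ (forall i l l', cls l = cls l' -> N i l = N i l'),
      (forall i i' l, cls i = cls i' -> N i l = N i' l) &
      (forall i j, kk (cls i) = 1%N -> kk (cls j) = 1%N -> N i j = 0)].

Lemma prod_single (A B : 'M[F]_n) i j :
  (forall l l', cls l = cls l' -> A i l = A i l') ->
  (forall l l', cls l = cls l' -> B l j = B l' j) ->
  (A *m B) i j = \sum_(l | kk (cls l) == 1%N) A i l * B l j.
Proof.
move=> HA HB; rewrite mxE (bigID (fun l => kk (cls l) == 1%N)) /=.
rewrite [X in _ + X](partition_big (fun l => cls l) xpredT) //= [X in _ + X]big1 ?addr0 // => a _.
case: (pickP (fun m => cls m == a)) => [l0 /eqP Hl0|none]; last first.
  by rewrite big_pred0 // => l; rewrite none andbF.
case: (kk12 l0) => k; rewrite Hl0 in k.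
  by rewrite big_pred0 // => l; case: (eqVneq (cls l) a) => [->|_]; rewrite ?k ?andbF.
rewrite (eq_bigl (fun l => cls l == a)); last first.
  by move=> l; case: (eqVneq (cls l) a) => [->|_]; rewrite ?k ?andbF.
apply: sum_cell_even => // l l' El El'.
by rewrite (HA l l') ?(HB l l') ?El ?El'.
Qed.

Lemma Jform_nil N : Jform N -> N *m N *m N = 0.
Proof.
move=> [HR HC H1].
have NN1 i j : kk (cls i) = 1%N \/ kk (cls j) = 1%N -> (N *m N) i j = 0.
  move=> Hij; rewrite prod_single; first last.
  - by move=> l l' E; apply: HC.
  - by move=> l l' E; apply: HR.
  apply: big1 => l /eqP kl.
  by case: Hij => k; [rewrite (H1 i l) ?mul0r | rewrite (H1 l j) ?mulr0].
apply/matrixP => i j; rewrite [RHS]mxE prod_single.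
- by apply: big1 => l /eqP kl; rewrite NN1 ?mul0r //; right.
- by move=> l l' E; rewrite !mxE; apply: eq_bigr => m _; rewrite (HR m l l').
- by move=> l l' E; apply: HC.
Qed.

Lemma Jform_mul Q M : T Q -> Jform M -> Jform (Q *m M).
Proof.
move=> TQ [HR HC H1]; have [GR GC] := T_good TQ; split.
- by move=> i l l' E; rewrite !mxE; apply: eq_bigr => m _; rewrite (HR m l l').
- move=> i i' l E; rewrite !mxE; apply: sum_cellconst.
    by move=> m m' Em; apply: HC.
  by move=> a; apply: GR.
- move=> i j ki kj.
  have W : W1 (\col_m M m j).
    split; first by move=> m m' Em; rewrite !mxE; apply: HC.
    by move=> m km; rewrite mxE; apply: H1.
  have [_ H] := W1_T TQ W; have := H i ki.
  rewrite mulv_entry mxE => E; transitivity (\sum_l Q i l * (\col_m M m j) l 0); last exact: E.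
  by apply: eq_bigr => m _; rewrite mxE.
Qed.


Lemma main_fwd (M : 'M[F]_n) : jacobson_radical T M -> @J1 F n d r x M.
Proof.
move=> HM; have TM := HM.1; have [HR HC] := T_good TM.
have Hconst i i' j j' : cls i = cls i' -> cls j = cls j' -> M i j = M i' j'.
  move=> Ei Ej; transitivity (M i' j).
    case: (kk12 j) => kj; first exact: colconst_single.
    by have := layer3 HM kj Ei; rewrite !mul_ev.
  case: (eqVneq j j') => [-> //|njj].
  have kj := kk2_of Ej njj.
  have := layer2 HM kj; move/matrixP => /(_ i' 0); rewrite mul_ind [RHS]mxE.
  rewrite (sum_cell_pair _ Ej njj) => /eqP; rewrite addr_eq0 oppF => /eqP //.
exists (fun a b => if [pick i0 | cls i0 == a] is Some i0 then
                   (if [pick j0 | cls j0 == b] is Some j0 then M i0 j0 else 0) else 0).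
apply/matrixP => i j; rewrite J1_entry.
case: ifP => Hmax.
  case: pickP => [i0 /eqP Ei0|none]; last by have := none i; rewrite eqxx.
  case: pickP => [j0 /eqP Ej0|none]; last by have := none j; rewrite eqxx.
  by apply: Hconst.
apply: layer1 => //.
  by case: (kk12 i) => // k; rewrite k in Hmax; case: (kk12 j) => k'; rewrite k' in Hmax.
by case: (kk12 j) => // k; rewrite k in Hmax; case: (kk12 i) => k'; rewrite k' in Hmax.
Qed.

Lemma main_bwd (M : 'M[F]_n) : @J1 F n d r x M -> jacobson_radical T M.
Proof.
move=> [c EM].
have TM : T M.
  rewrite EM; apply: T_sum => a _; apply: T_sum => b _; apply: T_scale.
  by apply: T_mul; [apply: T_mul; [exact: T_dual | exact: T_ones] | exact: T_dual].
have JM : Jform M.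
  split.
  - by move=> i l l' E; rewrite EM !J1_entry E.
  - by move=> i i' l E; rewrite EM !J1_entry E.
  - by move=> i j ki kj; rewrite EM J1_entry ki kj.
split => // L [[LT L0 LD LM] [M1 [TM1 nLM1]] Lmax].
apply: NNPP => nLM.
pose L' := fun P => T P /\ exists l Q, L l /\ T Q /\ P = l + Q *m M.
have LI : left_ideal T L'.
  split.
  - by move=> P [].
  - split; first exact: T0.
    by exists 0, 0; split => //; split; [exact: T0 | rewrite mul0mx addr0].
  - move=> P1 P2 [T1 [l1 [Q1 [L1 [TQ1 E1]]]]] [T2 [l2 [Q2 [L2 [TQ2 E2]]]]].
    split; first exact: T_add.
    exists (l1 + l2), (Q1 + Q2); split; first exact: LD.
    split; first exact: T_add.
    by rewrite E1 E2 mulmxDl addrACA.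
  - move=> A P TA [TP [l [Q [Ll [TQ E]]]]]; split; first exact: T_mul.
    exists (A *m l), (A *m Q); split; first exact: LM.
    split; first exact: T_mul.
    by rewrite E mulmxDr mulmxA.
have sub : forall P, L P -> L' P.
  move=> P LP; split; first exact: LT.
  by exists P, 0; split => //; split; [exact: T0 | rewrite mul0mx addr0].
case: (Lmax L' LI sub) => H.
  apply: nLM; apply/H; split => //.
  by exists 0, 1%:M; split => //; split; [exact: T_one | rewrite mul1mx add0r].
have [_ [l [Q [Ll [TQ E1]]]]] : L' 1%:M by apply/H; exact: T_one.
set N := Q *m M in E1.
have TN : T N by exact: T_mul.
have nil := Jform_nil (Jform_mul TQ JM).
have El : l = 1%:M - N by rewrite E1 addrK.
have TS : T (1%:M + N + N *m N) by apply: T_add; [apply: T_add; [exact: T_one|] | exact: T_mul].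
have L1 : L 1%:M.
  have := LM _ _ TS Ll; rewrite El mulmxBr mulmx1 !mulmxDl mul1mx -/N nil.
  by rewrite addr0 -[1%:M + N + N *m N]addrA addrK.
by apply: nLM1; have := LM _ _ TM1 L1; rewrite mulmx1.
Qed.

End Main.

Unset Implicit Arguments.

Theorem theoremC (F : fieldType) (n d : nat) (r : 'I_n -> 'I_n -> 'I_d.+1) (x : 'I_n) :
  (2 \in [pchar F])%N ->
  is_scheme r -> quasi_thin r ->
  forall M : 'M[F]_n,
    jacobson_radical (terwilliger r x) M <-> @J1 F n d r x M.
Proof.
move=> ch sc qt M; split; [exact: main_fwd | exact: main_bwd].
Qed.
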